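(* For all integers $k \geq 4$ and $n \geq 2k+3$, \[\iota(B'_{n,C(k)}, \{C_{k+1}\}) = \left\lfloor \frac{2n}{2k+3} \right\rfloor.\]
   Context: Graphs are finite and simple; $C_{m}$ denotes the cycle on $m$ vertices. For $D \subseteq V(G)$, $N[D]$ is the union of closed neighbourhoods of vertices of $D$; $D$ is $\{C_{k+1}\}$-isolating if $G - N[D]$ contains no $(k+1)$-cycle as a subgraph, and $\iota(G,\{C_{k+1}\})$ is the minimum size of such a set. Define $\mathrm{mod}^*$ as the usual modulo operation except that $ba \ \mathrm{mod}^*\ a = a$ (instead of $0$). For $r \geq 1$, $r < m$, $C_m^r$ is the graph on $[m]$ with edges $\{i, (i+j) \ \mathrm{mod}^*\ m\}$ for $i \in [m]$, $j \in [r]$. For $k \geq 2$: if $k$ is even, $C(k) = C_{2k+2}^{k/2}$; if $k$ is odd, $C(k)$ has vertex set $[2k+2]$ and edge set $E(C_{2k+2}^{(k-1)/2}) \cup \{\{i, i+\frac{k+1}{2}\} : i \in [\frac{k+1}{2}] \cup ([k+1+\frac{k+1}{2}] \setminus [k+1])\}$. For $n \geq 2k+3$, let $q = \lfloor n/(2k+3) \rfloor$ and $n = q(2k+3)+r$ with $0 \le r \le 2k+2$. Let $u_1,\dots,u_{q+r}$ be new vertices. Let $R$ be the empty graph if $r \le 1$, and if $r \ge 2$ let $R$ have vertex set $\{u_{q+j} : j \in [r]\}$ and edge set $\{u_{q+r}u_{q+j} : j \in [r-1]\}$. Let $G_1,\dots,G_q$ be pairwise disjoint copies of $C(k)$, disjoint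 from the $u$'s, with $v_{i,1},\dots,v_{i,2k+2}$ the vertices of $G_i$ corresponding to $1,\dots,2k+2$. Let $t=\min\{1,r\}$. The graph $B_{n,C(k)}$ has vertex set $\{u_1,\dots,u_{q+r}\} \cup \bigcup_{i=1}^q V(G_i)$ and edge set $\{u_iv_{i,1} : i \in [q]\} \cup \{u_iu_{i+1} : i \in [q+t-1]\} \cup E(R) \cup \bigcup_{i=1}^q E(G_i)$. Finally $B'_{n,C(k)}$ is the graph with the same vertex set as $B_{n,C(k)}$ and edge set $E(B_{n,C(k)}) \cup \binom{V(R)}{2}$ (i.e. $V(R)$ is made into a clique). *)

(* Defs.v *)
From mathcomp Require Import all_boot all_order.
Set Implicit Arguments. Unset Strict Implicit. Unset Printing Implicit Defensive.

Section Generic.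
Variable V : finType.
Variable adj : rel V.

Definition closed_nbhd (D : {set V}) : {set V} :=
  [set v | (v \in D) || [exists d in D, adj d v]].

Definition has_cycle_outside (m : nat) (S : {set V}) : bool :=
  [exists f : {ffun 'I_m -> V},
     [&& 3 <= m, injectiveb f, [forall i, f i \notin S]
       & [forall i : 'I_m, adj (f i) (f (ordS i))]]].

Definition isolating (m : nat) (D : {set V}) : bool :=
  ~~ has_cycle_outside m (closed_nbhd D).

(* iota(G, {C_m}) : minimum size of a {C_m}-isolating set.  (The whole vertex
   set is always isolating, so the bound #|V| is attained by a real set.) *)
Definition iso_num (m : nat) : nat :=
  \big[minn/#|V|]_(D : {set V} | isolating m D) #|D|.
End Generic.

Definition modstar (x m : nat) : nat := if x %% m == 0 then m else x %% m.

Definition powE (m r a b : nat) : bool :=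
  [&& 1 <= a, a <= m & has (fun j => b == modstar (a + j) m) (iota 1 r)].

Definition Ck_E (k a b : nat) : bool :=
  if ~~ odd k then powE (2 * k + 2) (k %/ 2) a b
  else powE (2 * k + 2) ((k - 1) %/ 2) a b
       || [&& ((1 <= a) && (a <= (k + 1) %/ 2))
              || ((k + 1 < a) && (a <= k + 1 + (k + 1) %/ 2))
            & b == a + (k + 1) %/ 2].

Definition Ck_adj (k a b : nat) : bool := Ck_E k a b || Ck_E k b a.

Definition qB (k n : nat) : nat := n %/ (2 * k + 3).
Definition rB (k n : nat) : nat := n %% (2 * k + 3).

(* inl a  ~  u_{a+1}  (a < q+r);   inr (i, j)  ~  v_{i+1, j+1}  (i < q, j < 2k+2) *)
Definition BV (k n : nat) : finType :=
  ('I_(qB k n + rB k n) + ('I_(qB k n) * 'I_(2 * k + 2)))%type.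

Definition Bp_E (k n : nat) (x y : BV k n) : bool :=
  let q := qB k n in let r := rB k n in let t := minn 1 r in
  match x, y with
  | inl a, inr (i, j) => (nat_of_ord a == nat_of_ord i) && (nat_of_ord j == 0)  (* u_i v_{i,1}, i in [q] *)
  | inl a, inl b =>
      ((nat_of_ord b == a.+1) && (a.+1 < q + t))          (* u_i u_{i+1}, i in [q+t-1] *)
      || [&& 2 <= r, nat_of_ord a != b, q <= a & q <= b]  (* V(R) is a clique (contains E(R)) *)
  | inr (i, j), inr (i', j') =>
      (i == i') && Ck_adj k j.+1 j'.+1
  | _, _ => false
  end.

Definition Bp_adj (k n : nat) : rel (BV k n) := fun x y => Bp_E x y || Bp_E y x.

(* Main.v *)
Require Import Defs.
From mathcomp Require Import all_boot all_order.
From mathcomp Require Import zify.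
Set Implicit Arguments. Unset Strict Implicit. Unset Printing Implicit Defensive.

Lemma modm z m : z < 2 * m -> z %% m = if z < m then z else z - m.
Proof.
move=> H; case: ltnP => H1; first by rewrite modn_small.
have -> : z = (z - m) + m by lia.
by rewrite modnDr modn_small; lia.
Qed.

Lemma modstarE x m : 0 < x < 2 * m -> modstar x m = if x <= m then x else x - m.
Proof.
move=> /andP [H0 H]; rewrite /modstar modm //.
case: (ltnP x m) => H1; case: eqP => H2; case: leqP => H3; lia.
Qed.

Lemma powEP m r a b : 0 < r < m ->
  powE m r a b <-> (1 <= a <= m /\ exists j, 1 <= j <= r /\
     (b = a + j /\ a + j <= m \/ b + m = a + j /\ m < a + j)).
Proof.
move=> /andP [Hr Hrm]; rewrite /powE; split.
- case/and3P => H1 H2 /hasP [j]; rewrite mem_iota => /andP [Hj1 Hj2] /eqP ->.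
  split; first lia.
  exists j; split; first lia.
  rewrite modstarE; last lia.
  case: ifP => H; lia.
- case=> Ha [j [Hj Hb]]; apply/and3P; split; try lia.
  apply/hasP; exists j; first by rewrite mem_iota; lia.
  apply/eqP; rewrite modstarE; last lia.
  case: ifP => H; lia.
Qed.

(* 0-indexed adjacency predicate *)
Definition Qadj (p e a b : nat) : Prop :=
  (exists j, 1 <= j <= p /\ (b = a + j \/ b + (2 * (2 * p + e) + 2) = a + j \/ a = b + j \/ a + (2 * (2 * p + e) + 2) = b + j))
  \/ (e = 1 /\ (((a <= p \/ 2 * p + 2 <= a <= 3 * p + 2) /\ b = a + p + 1)
             \/ ((b <= p \/ 2 * p + 2 <= b <= 3 * p + 2) /\ a = b + p + 1))).

Lemma kdecomp k : exists p e, k = 2 * p + e /\ e <= 1.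
Proof.
exists k./2, (odd k); split; last by case: odd.
by rewrite -{1}(odd_double_half k) -mul2n addnC.
Qed.

Lemma oddk p e : e <= 1 -> odd (2 * p + e) = (e == 1).
Proof. by case: e => [|[|]] //= _; rewrite ?addn0 ?addn1 /= ?oddS mul2n odd_double. Qed.

Lemma CkE_elim p e a b : e <= 1 -> 2 <= p ->
  a < 2 * (2 * p + e) + 2 -> b < 2 * (2 * p + e) + 2 ->
  Ck_E (2 * p + e) a.+1 b.+1 -> Qadj p e a b.
Proof.
move=> He Hp Ha Hb; rewrite /Ck_E oddk //.
case: eqP => [He1 | He0] /=; [rewrite He1 |].
- have -> : (2 * p + 1 - 1) %/ 2 = p by lia.
  have -> : (2 * p + 1 + 1) %/ 2 = p + 1 by lia.
  case/orP.
  + move/powEP; case; first lia.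
    move=> _ [j [Hj H]]; left; exists j; split => //; lia.
  + case/andP => H1 /eqP H2; right; split => //; lia.
- have -> : (2 * p + e) %/ 2 = p by lia.
  move/powEP; case; first lia.
  move=> _ [j [Hj H]]; left; exists j; split => //; lia.
Qed.

Lemma CkA_elim p e a b : e <= 1 -> 2 <= p ->
  a < 2 * (2 * p + e) + 2 -> b < 2 * (2 * p + e) + 2 ->
  Ck_adj (2 * p + e) a.+1 b.+1 -> Qadj p e a b.
Proof.
move=> He Hp Ha Hb; case/orP => H.
- exact: CkE_elim.
- have := CkE_elim He Hp Hb Ha H; rewrite /Qadj.
  case=> [[j [Hj H']]|[H1 H2]]; [left; exists j; split => //; lia | right; split => //; lia].
Qed.

Lemma pow_intro p e a b j : e <= 1 -> 2 <= p ->
  a < 2 * (2 * p + e) + 2 -> b < 2 * (2 * p + e) + 2 -> 1 <= j <= p ->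
  (b = a + j \/ b + (2 * (2 * p + e) + 2) = a + j) ->
  Ck_adj (2 * p + e) a.+1 b.+1.
Proof.
move=> He Hp Ha Hb Hj H; apply/orP; left; rewrite /Ck_E oddk //.
case: eqP => [He1 | He0] /=; [rewrite He1 |].
- have -> : (2 * p + 1 - 1) %/ 2 = p by lia.
  apply/orP; left; apply/powEP; first lia.
  split; first lia. exists j; split => //; lia.
- have -> : (2 * p + e) %/ 2 = p by lia.
  apply/powEP; first lia.
  split; first lia. exists j; split => //; lia.
Qed.

Lemma chord_intro p a b : 2 <= p ->
  a < 2 * (2 * p + 1) + 2 -> (a <= p \/ 2 * p + 2 <= a <= 3 * p + 2) -> b = a + p + 1 ->
  Ck_adj (2 * p + 1) a.+1 b.+1.
Proof.
move=> Hp Ha H1 H2; apply/orP; left; rewrite /Ck_E oddk //=.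
have -> : (2 * p + 1 + 1) %/ 2 = p + 1 by lia.
apply/orP; right; apply/andP; split; apply/eqP || idtac; lia.
Qed.

Lemma Ck_adjC k a b : Ck_adj k a b = Ck_adj k b a.
Proof. by rewrite /Ck_adj orbC. Qed.

Lemma modm_cases z m : z < 2 * m -> (z < m /\ z %% m = z) \/ (m <= z /\ z %% m = z - m).
Proof. move=> H; rewrite modm //; case: ltnP => H1; [left|right]; lia. Qed.

Section CK.
Variables (p e : nat).
Hypotheses (He : e <= 1) (Hp : 2 <= p).
Local Notation k := (2 * p + e).
Local Notation m := (2 * (2 * p + e) + 2).

Lemma adj_step v w : v < 2 * m -> w < 2 * m ->
  (w = v + 1 \/ w = v + 2 \/ v = w + 1 \/ v = w + 2) ->
  Ck_adj k (v %% m).+1 (w %% m).+1.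
Proof.
move=> Hv Hw H.
have := modm_cases Hv; have := modm_cases Hw.
have Hm : 0 < m by lia.
have := ltn_pmod v Hm; have := ltn_pmod w Hm.
move: (v %% m) (w %% m) => a b Hb Ha Cb Ca.
case: H => [H|[H|[H|H]]].
- apply: (@pow_intro _ _ _ _ 1) => //; lia.
- apply: (@pow_intro _ _ _ _ 2) => //; lia.
- rewrite Ck_adjC; apply: (@pow_intro _ _ _ _ 1) => //; lia.
- rewrite Ck_adjC; apply: (@pow_intro _ _ _ _ 2) => //; lia.
Qed.

Lemma far x : x < m -> exists s, s < m /\ forall t, t <= k ->
  (s + t) %% m != x /\ ~~ Ck_adj k x.+1 ((s + t) %% m).+1.
Proof.
move=> Hx.
have Hm : 0 < m by lia.
pose off := if (e == 1) && ((x <= p) || ((2 * p + 2 <= x) && (x <= 3 * p + 2))) then p + 2 else p + 1.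
have Hoff : (e = 1 /\ (x <= p \/ 2 * p + 2 <= x <= 3 * p + 2) /\ off = p + 2) \/
            (~ (e = 1 /\ (x <= p \/ 2 * p + 2 <= x <= 3 * p + 2)) /\ off = p + 1).
  rewrite /off; case: eqP => E1 /=; last by right; split => //; lia.
  case: ifP => H; [left | right]; split => //; lia.
exists ((x + off) %% m); split; first exact: ltn_pmod.
move=> t Ht.
have H1 : x + off < 2 * m by lia.
have := modm_cases H1; have := ltn_pmod (x + off) Hm.
move: ((x + off) %% m) => s Hs Cs.
have H2 : s + t < 2 * m by lia.
have := modm_cases H2; have := ltn_pmod (s + t) Hm.
move: ((s + t) %% m) => y Hy Cy.
split; first by apply/eqP; lia.
apply/negP => /(CkA_elim He Hp Hx Hy); case=> [[j [Hj H]] | [E1 H]]; lia.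
Qed.

Lemma near0 j : j < m -> j <= p + e \/ m - p <= j -> j = 0 \/ Ck_adj k 1 j.+1.
Proof.
move=> Hj H.
case: (ltnP p j) => H1.
- case: (ltnP j (m - p)) => H2.
  + have E1 : e = 1 /\ j = p + 1 by lia.
    case: E1 => E1 Ej; right; move: Hj; rewrite E1 => Hj.
    by apply: (chord_intro (a:=0)) => //; lia.
  + right; rewrite Ck_adjC; apply: (@pow_intro _ _ _ _ (m - j)) => //; lia.
- case: (posnP j) => [->|Hj0]; first by left.
  right; apply: (@pow_intro _ _ 0 _ j) => //; lia.
Qed.

Lemma nearK j : j < m -> p + e < j < m - p -> j = k + 1 \/ Ck_adj k (k + 1).+1 j.+1.
Proof.
move=> Hj H.
case: (ltngtP j (k + 1)) => H1; last by left.
- right; rewrite Ck_adjC; apply: (@pow_intro _ _ _ _ (k + 1 - j)) => //; lia.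
- case: (leqP j (k + 1 + p)) => H2.
  + right; apply: (@pow_intro _ _ _ _ (j - (k + 1))) => //; lia.
  + have E1 : e = 1 /\ j = 3 * p + 3 by lia.
    case: E1 => E1 Ej; right; move: Hj H1 H2; rewrite E1 => Hj H1 H2.
    by apply: chord_intro => //; lia.
Qed.

Lemma dom2 j : j < m -> (j = 0 \/ Ck_adj k 1 j.+1) \/ (j = k + 1 \/ Ck_adj k (k + 1).+1 j.+1).
Proof.
move=> Hj; case: (leqP j (p + e)) => H1; first by left; apply: near0 => //; lia.
case: (leqP (m - p) j) => H2; first by left; apply: near0 => //; lia.
by right; apply: nearK => //; lia.
Qed.

Lemma undomK j : j < m -> j != 0 -> j != k + 1 -> ~~ Ck_adj k (k + 1).+1 j.+1 ->
  1 <= j <= p + e \/ m - p <= j.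
Proof.
move=> Hj /eqP H0 /eqP H1 /negP H2.
case: (leqP j (p + e)) => H3; first by left; lia.
case: (leqP (m - p) j) => H4; first by right.
by case: (nearK Hj (ltac:(lia))).
Qed.

End CK.

Lemma php c c' (g : 'I_c -> nat) : injective g -> (forall i, g i < c') -> c <= c'.
Proof.
move=> Hg Hb.
pose g' := fun i => Ordinal (Hb i).
have Hi : injective g' by move=> a b [] /Hg.
by have := leq_card g' Hi; rewrite !card_ord.
Qed.

Lemma ordS_val N (t : 'I_N.+1) : nat_of_ord (ordS t) = if t < N then t.+1 else 0.
Proof.
rewrite /ordS /=; case: ltnP => H; first by rewrite modn_small.
have -> : t.+1 = N.+1 by have := ltn_ord t; lia.
by rewrite modnn.
Qed.

Lemma cyc_const N (h : 'I_N.+1 -> bool) : (forall t, h t = h (ordS t)) -> forall t, h t = h ord0.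
Proof.
move=> H t.
have E : forall n, n <= N -> h (inord n) = h ord0.
  elim => [|n IH] Hn.
    by congr h; apply: val_inj; rewrite /= inordK.
  rewrite -IH ?(ltnW Hn) // (H (inord n)); congr h; apply: ord_inj.
  rewrite ordS_val /= !inordK; try lia.
  by rewrite Hn.
by rewrite -(E t) ?inord_val // -ltnS.
Qed.

Definition gpos (k t : nat) := if 2 * t <= k then 2 * t else 2 * (k - t) + 1.

Lemma gpos_le k t : t <= k -> gpos k t <= k.
Proof. rewrite /gpos; case: ifP; lia. Qed.

Lemma gpos_inj k a b : a <= k -> b <= k -> gpos k a = gpos k b -> a = b.
Proof. rewrite /gpos; case: ifP; case: ifP; lia. Qed.

Lemma gpos_step k t : 1 <= k -> t <= k ->
  let v := gpos k t in let w := gpos k (if t < k then t.+1 else 0) in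
  (w = v + 1 \/ w = v + 2 \/ v = w + 1 \/ v = w + 2).
Proof.
move=> Hk Ht /=; case: (ltnP t k) => H.
- rewrite /gpos; case: ifP => H1; case: ifP => H2; lia.
- have Et : t = k by lia.
  subst t; rewrite /gpos muln0 leq0n; case: ifP => H1; lia.
Qed.

Section G.
Variables (p e n : nat).
Hypotheses (He : e <= 1) (Hp : 2 <= p) (Hnn : 2 * (2 * p + e) + 3 <= n).
Local Notation k := (2 * p + e).
Local Notation m := (2 * (2 * p + e) + 2).
Local Notation q := (qB (2 * p + e) n).
Local Notation r := (rB (2 * p + e) n).
Local Notation V := (BV (2 * p + e) n).
Local Notation adj := (@Bp_adj (2 * p + e) n).

Lemma m_gt0 : 0 < m. Proof. by rewrite addn2. Qed.
Definition vx z : 'I_m := Ordinal (ltn_pmod z m_gt0).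

Lemma q_gt0 : 0 < q.
Proof. by rewrite /qB divn_gt0 //; lia. Qed.
Lemma r_lt : r < 2 * k + 3.
Proof. by rewrite /rB ltn_pmod // addn3. Qed.
Lemma n_eq : n = q * (2 * k + 3) + r.
Proof. exact: divn_eq. Qed.

Lemma adj_rr i j i' j' : adj (inr (i, j)) (inr (i', j')) = (i == i') && Ck_adj k j.+1 j'.+1.
Proof.
rewrite /Bp_adj /= eq_sym (Ck_adjC _ j'.+1).
by case: (i' == i) => //=; rewrite orbb.
Qed.

Lemma adj_lr (a : 'I_(q + r)) i j : adj (inl a) (inr (i, j)) = (nat_of_ord a == nat_of_ord i) && (nat_of_ord j == 0).
Proof. by rewrite /Bp_adj /= orbF. Qed.

Lemma adj_rl (a : 'I_(q + r)) i j : adj (inr (i, j)) (inl a) = (nat_of_ord a == nat_of_ord i) && (nat_of_ord j == 0).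
Proof. by rewrite /Bp_adj /=. Qed.

Lemma adj_ll (a b : 'I_(q + r)) : adj (inl a) (inl b) ->
  (nat_of_ord b = a.+1 /\ a.+1 < q + minn 1 r) \/ (nat_of_ord a = b.+1 /\ b.+1 < q + minn 1 r)
  \/ (2 <= r /\ nat_of_ord a <> nat_of_ord b /\ q <= a /\ q <= b).
Proof.
rewrite /Bp_adj /=.
case/orP => /orP [/andP [/eqP H1 H2] | /and4P [H1 /eqP H2 H3 H4]] ; try by [left | right; left];
  right; right; repeat split => //; lia.
Qed.

Lemma inN (D : {set V}) x : (x \in closed_nbhd adj D) = (x \in D) || [exists d in D, adj d x].
Proof. by rewrite inE. Qed.

Lemma inN_adj (D : {set V}) d x : d \in D -> adj d x -> x \in closed_nbhd adj D.
Proof. by move=> Hd Ha; rewrite inN; apply/orP; right; apply/existsP; exists d; rewrite Hd. Qed.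

Lemma inN_D (D : {set V}) x : x \in D -> x \in closed_nbhd adj D.
Proof. by move=> Hd; rewrite inN Hd. Qed.

Lemma copy_cycle (i : 'I_q) s (S : {set V}) : s < m ->
  (forall t, t <= k -> inr (i, vx (s + t)) \notin S) -> has_cycle_outside adj k.+1 S.
Proof.
move=> Hs HS.
apply/existsP; exists [ffun t : 'I_k.+1 => inr (i, vx (s + gpos k t)) : V].
apply/and4P; split.
- lia.
- apply/injectiveP => a b; rewrite !ffunE => E0.
  have /= E := congr1 (fun x : V => match x with inr (_, j) => val j | _ => 0 end) E0.
  have Ha := gpos_le (ltnSE (ltn_ord a)).
  have Hb := gpos_le (ltnSE (ltn_ord b)).
  have H1 : s + gpos k a < 2 * m by lia.
  have H2 : s + gpos k b < 2 * m by lia.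
  have := modm_cases H1; have := modm_cases H2.
  move: E; move: ((s + gpos k a) %% m) ((s + gpos k b) %% m) => x y E C1 C2.
  apply: ord_inj; apply: (@gpos_inj k); try lia.
  + exact: ltnSE (ltn_ord a).
  + exact: ltnSE (ltn_ord b).
- apply/forallP => t; rewrite ffunE; apply: HS; exact: gpos_le (ltnSE (ltn_ord t)).
- apply/forallP => t; rewrite !ffunE adj_rr eqxx andTb.
  have Ht := ltnSE (ltn_ord t).
  have := gpos_step (ltac:(lia) : 1 <= k) Ht; rewrite -ordS_val => Hst.
  have Ha := gpos_le Ht.
  have Hb := gpos_le (ltnSE (ltn_ord (ordS t))).
  apply: adj_step => //; lia.
Qed.

Lemma qr_gt0 : 0 < q + r.
Proof. have := q_gt0; lia. Qed.
Definition uo z : 'I_(q + r) := insubd (Ordinal qr_gt0) z.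
Lemma uo_val z : z < q + r -> nat_of_ord (uo z) = z.
Proof. by move=> H; rewrite /uo -[nat_of_ord _]/(val _) val_insubd H. Qed.

Lemma vx_val z : nat_of_ord (vx z) = z %% m.
Proof. by []. Qed.

Lemma adj_ll_intro (a b : 'I_(q + r)) : 2 <= r -> nat_of_ord a != b -> q <= a -> q <= b ->
  adj (inl a) (inl b).
Proof.
move=> H1 H2 H3 H4; rewrite /Bp_adj /=; apply/orP; left; apply/orP; right.
by apply/and4P; split.
Qed.

Definition blkn (x : V) : nat :=
  match x with inl a => if a < q then nat_of_ord a else q | inr (i, _) => nat_of_ord i end.

Lemma blkn_le x : blkn x <= q.
Proof. by case: x => [a | [i j]] /=; [case: ifP => // /ltnW | exact: ltnW]. Qed.

Lemma block_ge2 (D : {set V}) (i : 'I_q) : isolating adj k.+1 D ->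
  2 <= #|[set x in D | blkn x == i]|.
Proof.
move=> Hiso; rewrite leqNgt; apply/negP => Hc.
have Hle : #|[set x in D | blkn x == i]| <= 1 by lia.
move/card_le1_eqP: Hle => Heq.
have Hin : forall x, x \in D -> blkn x == i -> x \in [set x in D | blkn x == i].
  by move=> x H1 H2; rewrite inE H1 H2.
pose x0 : 'I_m := if [pick j : 'I_m | inr (i, j) \in D] is Some j then j else vx 0.
have Hdom : forall j : 'I_m, inr (i, j) \in closed_nbhd adj D -> j = x0 \/ Ck_adj k x0.+1 j.+1.
  move=> j; rewrite inN => /orP [Hj | /existsP [d /andP [Hd Had]]].
  - left; rewrite /x0; case: pickP => [j' Hj' | H0]; last by have := H0 j; rewrite Hj.
    have := Heq (inr (i, j')) (inr (i, j)) (Hin _ Hj' (eqxx _)) (Hin _ Hj (eqxx _)).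
    by case.
  - move: Hd Had; case: d => [a | [i' j']] Hd Had.
    + rewrite adj_lr in Had; case/andP: Had => /eqP Ha /eqP Hj0.
      left; rewrite /x0; case: pickP => [j' Hj' | H0].
      * have Hb : blkn (inl a) == i by rewrite /= Ha ltn_ord.
        by have := Heq (inr (i, j')) (inl a) (Hin _ Hj' (eqxx _)) (Hin _ Hd Hb).
      * by (apply: ord_inj; rewrite ?vx_val mod0n).
    + rewrite adj_rr in Had; case/andP: Had => /eqP Hii Hck; subst i'.
      right; rewrite /x0; case: pickP => [j'' Hj'' | H0]; last by have := H0 j'; rewrite Hd.
      have := Heq (inr (i, j'')) (inr (i, j')) (Hin _ Hj'' (eqxx _)) (Hin _ Hd (eqxx _)).
      by case => E; rewrite -E.
have [s [Hs Hfar]] := far He Hp (ltn_ord x0).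
move/negP: Hiso; apply; apply: (copy_cycle (i:=i) Hs) => t Ht.
have [H1 H2] := Hfar t Ht.
apply/negP => /Hdom [E | E].
- by move/eqP: H1; apply; rewrite -vx_val E.
- by move/negP: H2; apply; rewrite -vx_val.
Qed.

Lemma block_last (D : {set V}) : isolating adj k.+1 D -> k + 2 <= r ->
  1 <= #|[set x in D | blkn x == q]|.
Proof.
move=> Hiso Hr; rewrite leqNgt; apply/negP => Hc.
have H0 : [set x in D | blkn x == q] = set0 by apply/eqP; rewrite -cards_eq0; lia.
have HD : forall x, x \in D -> blkn x != q.
  by move=> x Hx; apply/negP => Hb; have := in_set0 x; rewrite -H0 inE Hx Hb.
move/negP: Hiso; apply.
apply/existsP; exists [ffun t : 'I_k.+1 => inl (uo (q + 1 + t)) : V].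
have Hu : forall t : 'I_k.+1, nat_of_ord (uo (q + 1 + t)) = q + 1 + t.
  by move=> t; apply: uo_val; have := ltn_ord t; lia.
apply/and4P; split.
- lia.
- apply/injectiveP => a b; rewrite !ffunE => E0.
  have /= E := congr1 (fun x : V => match x with inl a => nat_of_ord a | _ => 0 end) E0.
  by apply: ord_inj; move: E; rewrite !Hu; lia.
- apply/forallP => t; rewrite ffunE inN; apply/norP; split.
  + apply/negP => /HD /=; rewrite Hu; case: ifP => H; [lia | by rewrite eqxx].
  + apply/negP => /existsP [d /andP [Hd Had]]; move: Hd Had; case: d => [b | [i j]] Hd Had.
    * have Hb := HD _ Hd; move: Hb => /=; case: ifP => Hbq Hb; last by rewrite eqxx in Hb.
      have := adj_ll Had; rewrite Hu; lia.
    * by move: Had; rewrite adj_rl Hu => /andP [/eqP Hi _]; have := ltn_ord i; lia.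
- apply/forallP => t; rewrite !ffunE; apply: adj_ll_intro; rewrite ?Hu; try lia.
  rewrite ordS_val; case: ifP => Htk; lia.
Qed.

Lemma card_blocks (D : {set V}) : #|D| = \sum_(b < q.+1) #|[set x in D | blkn x == b]|.
Proof.
rewrite -sum1_card (partition_big (fun x => (inord (blkn x) : 'I_q.+1)) xpredT) //=.
apply: eq_bigr => b _; rewrite sum1dep_card; apply: eq_card => x; rewrite !inE.
case: (x \in D) => //=.
by rewrite -val_eqE /= inordK // ltnS blkn_le.
Qed.

Lemma lower (D : {set V}) : isolating adj k.+1 D -> 2 * q + (k + 2 <= r) <= #|D|.
Proof.
move=> Hiso; rewrite card_blocks big_ord_recr /=.
apply: leq_add.
- have -> : 2 * q = \sum_(b < q) 2 by rewrite big_const_ord iter_addn_0 mulnC.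
  by apply: leq_sum => b _; exact: block_ge2.
- case: (leqP (k + 2) r) => Hr //; exact: block_last.
Qed.

Lemma adj_ll_intro2 (a b : 'I_(q + r)) : nat_of_ord a = b.+1 -> b.+1 < q + minn 1 r ->
  adj (inl b) (inl a).
Proof.
move=> H1 H2; rewrite /Bp_adj /=; apply/orP; left; apply/orP; left.
by apply/andP; split => //; apply/eqP.
Qed.

Lemma copy_dom (D : {set V}) (i : 'I_q) :
  inr (i, vx 0) \in D -> inr (i, vx (k + 1)) \in D ->
  forall j, inr (i, j) \in closed_nbhd adj D.
Proof.
move=> H0 H1 j.
have Hk1 : (k + 1) %% m = k + 1 by rewrite modn_small //; lia.
case: (dom2 He Hp (ltn_ord j)) => [[E|A]|[E|A]].
- by apply: inN_D; have -> : j = vx 0 by (apply: ord_inj; rewrite ?vx_val mod0n).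
- by apply: (inN_adj H0); rewrite adj_rr eqxx /= ?vx_val mod0n.
- by apply: inN_D; have -> : j = vx (k + 1) by (apply: ord_inj; rewrite ?vx_val Hk1).
- by apply: (inN_adj H1); rewrite adj_rr eqxx /= ?vx_val Hk1.
Qed.

Lemma u_dom (D : {set V}) (a : 'I_(q + r)) (i : 'I_q) :
  nat_of_ord a = i -> inr (i, vx 0) \in D -> inl a \in closed_nbhd adj D.
Proof. by move=> Ha H; apply: (inN_adj H); rewrite adj_rl Ha eqxx vx_val mod0n. Qed.

Definition F0 (x : 'I_q * bool) : V := inr (x.1, if x.2 then vx (k + 1) else vx 0).
Definition D0 : {set V} := F0 @: [set: 'I_q * bool].

Lemma D0_card : #|D0| <= 2 * q.
Proof.
apply: leq_trans (leq_imset_card _ _) _.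
by rewrite cardsT card_prod card_ord card_bool mulnC.
Qed.

Lemma D0_0 (i : 'I_q) : inr (i, vx 0) \in D0.
Proof. by apply/imsetP; exists (i, false). Qed.
Lemma D0_K (i : 'I_q) : inr (i, vx (k + 1)) \in D0.
Proof. by apply/imsetP; exists (i, true). Qed.

Lemma upperA : r <= k -> isolating adj k.+1 D0.
Proof.
move=> Hr; apply/negP => /existsP [f /and4P [_ /injectiveP Hinj /forallP Hout _]].
have Hform : forall t, exists a : 'I_(q + r), f t = inl a /\ q <= a.
  move=> t; have := Hout t; case E: (f t) => [a | [i j]] Hn.
  - exists a; split => //; rewrite leqNgt; apply/negP => Ha.
    by move/negP: Hn; apply; apply: (u_dom (i := Ordinal Ha)) => //; exact: D0_0.
  - by exfalso; move/negP: Hn; apply; apply: copy_dom; [exact: D0_0 | exact: D0_K].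
pose h := fun t : 'I_k.+1 => match f t with inl a => nat_of_ord a - q | _ => 0 end.
have : k.+1 <= r.
  apply: (php (g := h)).
  - move=> a b; rewrite /h; have [a' [Ea Ha]] := Hform a; have [b' [Eb Hb]] := Hform b.
    rewrite Ea Eb => E; apply: Hinj; rewrite Ea Eb; congr inl; apply: ord_inj; lia.
  - move=> t; rewrite /h; have [a' [Ea Ha]] := Hform t; rewrite Ea; have := ltn_ord a'; lia.
lia.
Qed.

Definition D2 : {set V} := inl (uo (q + r - 1)) |: D0.

Lemma D2_card : #|D2| <= 2 * q + 1.
Proof. rewrite cardsU1; have := D0_card; case: (_ \notin _) => /=; lia. Qed.

Lemma upperB : k + 2 <= r -> isolating adj k.+1 D2.
Proof.
move=> Hr.
have Hall : forall x, x \in closed_nbhd adj D2.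
  case=> [a | [i j]].
  - case: (ltnP a q) => Ha.
    + by apply: (u_dom (i := Ordinal Ha)) => //; apply/setU1r; exact: D0_0.
    + have Hu : nat_of_ord (uo (q + r - 1)) = q + r - 1 by apply: uo_val; lia.
      case: (eqVneq (nat_of_ord a) (q + r - 1)) => Ea.
      * apply: inN_D; have -> : a = uo (q + r - 1) by apply: ord_inj; rewrite Hu.
        exact: setU11.
      * apply: (inN_adj (setU11 _ _)); apply: adj_ll_intro; rewrite ?Hu; lia.
  - by apply: copy_dom; apply/setU1r; [exact: D0_0 | exact: D0_K].
apply/negP => /existsP [f /and4P [_ _ /forallP Hout _]].
by have := Hout ord0; rewrite Hall.
Qed.

Lemma qm1_lt : q - 1 < q. Proof. have := q_gt0; lia. Qed.

Definition F1 (x : 'I_q * bool) : V :=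
  if x.2 then inr (x.1, vx (k + 1))
  else if nat_of_ord x.1 == q - 1 then inl (uo x.1) else inr (x.1, vx 0).
Definition D1 : {set V} := F1 @: [set: 'I_q * bool].

Lemma D1_card : #|D1| <= 2 * q.
Proof.
apply: leq_trans (leq_imset_card _ _) _.
by rewrite cardsT card_prod card_ord card_bool mulnC.
Qed.

Lemma undom1 : r = k + 1 -> forall x, x \notin closed_nbhd adj D1 ->
  (exists a : 'I_(q + r), x = inl a /\ q + 1 <= a) \/
  (exists (i : 'I_q) (j : 'I_m), x = inr (i, j) /\ nat_of_ord i = q - 1 /\
     (1 <= j <= p + e \/ m - p <= j)).
Proof.
move=> Hr x Hn.
have Hq := q_gt0.
have Huq : nat_of_ord (uo (q - 1)) = q - 1 by apply: uo_val; lia.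
have Hmem : inl (uo (q - 1)) \in D1.
  apply/imsetP; exists (Ordinal qm1_lt, false); first by rewrite inE.
  rewrite /F1 /= eqxx; congr inl; apply: ord_inj; rewrite Huq uo_val //=; lia.
have Hk1 : (k + 1) %% m = k + 1 by rewrite modn_small //; lia.
move: Hn; case: x => [a | [i j]] Hn.
- left; exists a; split => //; rewrite leqNgt; apply/negP => Ha.
  move/negP: Hn; apply.
  case: (ltngtP a (q - 1)) => Haq.
  + have Haq' : a < q by lia.
    apply: (u_dom (i := Ordinal Haq')) => //.
    apply/imsetP; exists (Ordinal Haq', false); first by rewrite inE.
    by rewrite /F1 /= ifN //; apply/eqP => /= E; lia.
  + apply: (inN_adj Hmem); apply: adj_ll_intro2; rewrite Huq; lia.
  + apply: inN_D; have -> : a = uo (q - 1) by apply: ord_inj; rewrite Huq.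
    exact: Hmem.
- have Hi : nat_of_ord i = q - 1.
    apply/eqP; apply: contraR Hn => Hi; apply: copy_dom.
    + apply/imsetP; exists (i, false); first by rewrite inE.
      by rewrite /F1 /= ifN.
    + by apply/imsetP; exists (i, true).
  right; exists i, j; split => //; split => //.
  have HK : inr (i, vx (k + 1)) \in D1 by apply/imsetP; exists (i, true).
  apply: (undomK He Hp (ltn_ord j)).
  + apply/eqP => Ej; move/negP: Hn; apply; apply: (inN_adj Hmem).
    by rewrite adj_lr Huq Hi Ej !eqxx.
  + apply/eqP => Ej; move/negP: Hn; apply; apply: inN_D.
    by have -> : j = vx (k + 1) by (apply: ord_inj; rewrite ?vx_val Hk1).
  + apply/negP => A; move/negP: Hn; apply; apply: (inN_adj HK).
    by rewrite adj_rr eqxx /= ?vx_val Hk1.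
Qed.

Lemma upperC : r = k + 1 -> isolating adj k.+1 D1.
Proof.
move=> Hr; apply/negP => /existsP [f /and4P [_ /injectiveP Hinj /forallP Hout /forallP Hadj]].
have Hf := fun t => undom1 Hr (Hout t).
pose side := fun x : V => if x is inl _ then true else false.
have Hside : forall t, side (f t) = side (f (ordS t)).
  move=> t; have := Hadj t.
  case: (Hf t) => [[a [Ea Ha]] | [i [j [Ea [Hi Hj]]]]];
  case: (Hf (ordS t)) => [[b [Eb Hb]] | [i' [j' [Eb [Hi' Hj']]]]]; rewrite Ea Eb //=.
  - by rewrite adj_lr => /andP [/eqP H _]; have := ltn_ord i'; lia.
  - by rewrite adj_rl => /andP [/eqP H _]; have := ltn_ord i; lia.
have Hc := cyc_const Hside.
case Es: (side (f ord0)).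
- have Hform : forall t, exists a : 'I_(q + r), f t = inl a /\ q + 1 <= a.
    move=> t; case: (Hf t) => [//| [i [j [Ea _]]]].
    by have := Hc t; rewrite Es Ea.
  pose h := fun t : 'I_k.+1 => match f t with inl a => nat_of_ord a - (q + 1) | _ => 0 end.
  have : k.+1 <= k.
    apply: (php (g := h)).
    + move=> a b; rewrite /h; have [a' [Ea Ha]] := Hform a; have [b' [Eb Hb]] := Hform b.
      rewrite Ea Eb => E; apply: Hinj; rewrite Ea Eb; congr inl; apply: ord_inj; lia.
    + move=> t; rewrite /h; have [a' [Ea Ha]] := Hform t; rewrite Ea; have := ltn_ord a'; lia.
  lia.
- have Hform : forall t, exists (i : 'I_q) (j : 'I_m), f t = inr (i, j) /\ nat_of_ord i = q - 1 /\
     (1 <= j <= p + e \/ m - p <= j).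
    move=> t; case: (Hf t) => [[a [Ea _]]|//].
    by have := Hc t; rewrite Es Ea.
  pose h := fun t : 'I_k.+1 => match f t with
     inr (_, j) => if nat_of_ord j <= p + e then nat_of_ord j - 1 else nat_of_ord j + k - m
   | _ => 0 end.
  have : k.+1 <= k.
    apply: (php (g := h)).
    + move=> a b; rewrite /h.
      have [ia [ja [Ea [Hia Hja]]]] := Hform a; have [ib [jb [Eb [Hib Hjb]]]] := Hform b.
      rewrite Ea Eb => E; apply: Hinj; rewrite Ea Eb.
      have -> : ia = ib by apply: ord_inj; lia.
      have -> : ja = jb.
        apply: ord_inj; have := ltn_ord ja; have := ltn_ord jb.
        move: E; case: ifP => H1; case: ifP => H2; lia.
      by [].
    + move=> t; rewrite /h; have [i [j [Ea [Hi Hj]]]] := Hform t; rewrite Ea.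
      have := ltn_ord j; case: ifP => H1; lia.
  lia.
Qed.

Lemma target : (2 * n) %/ (2 * k + 3) = 2 * q + (k + 2 <= r).
Proof.
have Hd : 0 < 2 * k + 3 by lia.
have Hrl := r_lt.
rewrite {1}n_eq.
have -> : 2 * (q * (2 * k + 3) + r) = (2 * q) * (2 * k + 3) + 2 * r by lia.
rewrite divnMDl //; congr addn.
case: (leqP (k + 2) r) => H.
- have -> : 2 * r = 1 * (2 * k + 3) + (2 * r - (2 * k + 3)) by lia.
  by rewrite divnMDl // divn_small //; lia.
- by rewrite divn_small //; lia.
Qed.

End G.

Lemma iso_le (V : finType) (adj : rel V) m D : isolating adj m D -> iso_num adj m <= #|D|.
Proof.
move=> H; rewrite /iso_num.
have : D \in index_enum {set V} by rewrite mem_index_enum.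
elim: (index_enum _) => [//|x s IH] /=; rewrite inE big_cons.
case/orP => [/eqP <- | Hs]; first by rewrite H geq_minl.
case: ifP => _; last exact: IH.
by rewrite geq_min IH ?orbT.
Qed.

Lemma iso_ge (V : finType) (adj : rel V) m L :
  (forall D, isolating adj m D -> L <= #|D|) -> L <= #|V| -> L <= iso_num adj m.
Proof.
move=> H HV; rewrite /iso_num; elim/big_ind: _ => //.
- by move=> x y Hx Hy; rewrite leq_min Hx Hy.
Qed.

Lemma isoT (V : finType) (adj : rel V) m : isolating adj m setT.
Proof.
apply/negP => /existsP [f /and4P [Hm _ /forallP Hout _]].
have H0 : 0 < m by lia.
by have := Hout (Ordinal H0); rewrite inE in_setT.
Qed.

Theorem lemma4 (k n : nat) :
  4 <= k -> 2 * k + 3 <= n ->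
  iso_num (@Bp_adj k n) k.+1 = (2 * n) %/ (2 * k + 3).
Proof.
move=> Hk Hn; have [p [e [Hke He]]] := kdecomp k; subst k.
have Hp : 2 <= p by lia.
rewrite (target He Hp Hn).
apply/eqP; rewrite eqn_leq; apply/andP; split.
- case: (ltngtP (rB (2 * p + e) n) (2 * p + e + 1)) => Hr.
  + apply: leq_trans (iso_le (upperA He Hp Hn _)) _; first lia.
    by apply: leq_trans (D0_card _ _ _) _; apply: leq_addr.
  + apply: leq_trans (iso_le (upperB He Hp Hn _)) _; first lia.
    rewrite (_ : (2 * p + e + 2 <= rB (2 * p + e) n) = true); last lia.
    exact: D2_card.
  + apply: leq_trans (iso_le (upperC He Hp Hn Hr)) _.
    by apply: leq_trans (D1_card _ _ _) _; apply: leq_addr.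
- apply: iso_ge; first by move=> D HD; exact: lower.
  rewrite -cardsT; apply: lower => //; exact: isoT.
Qed.
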